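(* Let $C\subseteq\mathbb{F}_q^{2n}$ be a symplectic self-orthogonal $\mathbb F_q$-linear code of dimension $n-k$ (so that $Q(C)$ is an $[[n,k]]_q$ stabilizer code), and let $\emptyset\neq I\subsetneq J\subseteq\{1,\dots,n\}$. Assume $\mathrm{swt}(C)\geq|I|+1$. If \[n+k-2|J|+2|I|>0\quad\text{and}\quad \mathrm{gsw}_{\,n+k-2|J|+2|I|}\left(C^{\perp_s}\right)\geq n-|J|+1,\] then $\sigma_I\left[\pi_J\left(C^{\perp_s}\right)\right]\neq\sigma_I(C)$.
   Context: Vectors of $\mathbb{F}_q^{2n}$ are written $(\mathbf a|\mathbf b)$, coordinate pair $(a_j,b_j)$ indexed by $j\in\{1,\dots,n\}$. Symplectic form $(\mathbf a|\mathbf b)\cdot_s(\mathbf c|\mathbf d)=\mathbf a\cdot\mathbf d-\mathbf b\cdot\mathbf c$; $C^{\perp_s}$ its dual; $C$ symplectic self-orthogonal if $C\subseteq C^{\perp_s}$. Symplectic weight of $(\mathbf a|\mathbf b)$: $\#\{j:(a_j,b_j)\ne(0,0)\}$; $\mathrm{swt}(D)$ is the minimum symplectic weight of a nonzero vector of $D$. For $R\subseteq\{1,\dots,n\}$: $\pi_R(\mathbf a|\mathbf b)=(a_j|b_j)_{j\in R}$, puncturing $\pi_R(D)=\{\pi_R(\mathbf y):\mathbf y\in D\}$, shortening $\sigma_R(D)=\{\pi_R(\mathbf y):\mathbf y=(\mathbf a|\mathbf b)\in D,\ \mathrm{supp}(\mathbf a)\cup\mathrm{supp}(\mathbf b)\subseteq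 R\}$; the shortening at $I$ of a code with coordinate pairs indexed by $J\supseteq I$ is defined the same way. For an $\mathbb F_q$-linear $D\subseteq\mathbb F_q^{2n}$ and $1\le t\le\dim D$, the $t$-th generalized symplectic weight is $\mathrm{gsw}_t(D)=\min\{|R|:R\subseteq\{1,\dots,n\},\ \dim\sigma_R(D)\ge t\}$. *)

(* Defs.v *)
From HB Require Import structures.
From mathcomp Require Import all_boot all_order all_algebra.
Set Implicit Arguments. Unset Strict Implicit. Unset Printing Implicit Defensive.
Import GRing.Theory.
Local Open Scope ring_scope.

Section Symplectic.
Variables (F : finFieldType) (n : nat).

(* A vector (a|b) of F_q^{2n}: the pair of row vectors a, b. *)
Definition svec := ('rV[F]_n * 'rV[F]_n)%type.

Definition sympl (x y : svec) : F :=
  \sum_(j < n) (x.1 0 j * y.2 0 j - x.2 0 j * y.1 0 j).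

Definition sdual (C : {vspace svec}) : {vspace svec} :=
  <<[seq y <- enum {: svec} | [forall x : svec, (x \in C) ==> (sympl x y == 0%R)]]>>%VS.

Definition ssupp (x : svec) : {set 'I_n} :=
  [set j | (x.1 0 j != 0) || (x.2 0 j != 0)].
Definition swt (x : svec) : nat := #|ssupp x|.

(* pi_R, represented by zeroing the coordinate pairs outside R *)
Definition sproj (R : {set 'I_n}) (x : svec) : svec :=
  (\row_j (if j \in R then x.1 0 j else 0), \row_j (if j \in R then x.2 0 j else 0)).

Definition spuncture (R : {set 'I_n}) (D : {vspace svec}) : {vspace svec} :=
  <<[seq sproj R y | y <- enum {: svec} & y \in D]>>%VS.

Definition sshorten (R : {set 'I_n}) (D : {vspace svec}) : {vspace svec} :=
  <<[seq sproj R y | y <- enum {: svec} & (y \in D) && (ssupp y \subset R)]>>%VS.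

Definition gsw (t : nat) (D : {vspace svec}) : nat :=
  \big[minn/n]_(R : {set 'I_n} | (t <= \dim (sshorten R D))%N) #|R|.

Definition swt_ge (D : {vspace svec}) (d : nat) : Prop :=
  forall x : svec, x \in D -> x != 0 -> (d <= swt x)%N.

End Symplectic.

(* Main.v *)
Require Import Defs.
From HB Require Import structures.
From mathcomp Require Import all_boot all_order all_algebra.
From mathcomp Require Import ring zify.
Set Implicit Arguments. Unset Strict Implicit. Unset Printing Implicit Defensive.
Import GRing.Theory.
Local Open Scope ring_scope.

Section S.
Variables (F : finFieldType) (n : nat).
Local Notation sv := (svec F n).

Lemma dimsv : dim sv = (n + n)%N.
Proof. rewrite [LHS]/dim /=. have h := dim_matrix F 1 n. rewrite h. by rewrite mul1r. Qed.

Lemma sproj1 (R : {set 'I_n}) (x : sv) j : (sproj R x).1 0 j = if j \in R then x.1 0 j else 0.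
Proof. by rewrite /sproj /= mxE. Qed.
Lemma sproj2 (R : {set 'I_n}) (x : sv) j : (sproj R x).2 0 j = if j \in R then x.2 0 j else 0.
Proof. by rewrite /sproj /= mxE. Qed.

Lemma sv_eq (x y : sv) : (forall j, x.1 0 j = y.1 0 j) -> (forall j, x.2 0 j = y.2 0 j) -> x = y.
Proof.
case: x => x1 x2; case: y => y1 y2 /= h1 h2.
by congr pair; apply/matrixP => i j; rewrite (ord1 i) ?h1 ?h2.
Qed.

Lemma sproj_lin (R : {set 'I_n}) : linear (sproj R : sv -> sv).
Proof.
move=> a x y; apply: sv_eq => j.
  rewrite /sproj /= !mxE.
  by case: ifP => _; rewrite ?mulr0 ?addr0.
rewrite /sproj /= !mxE.
by case: ifP => _; rewrite ?mulr0 ?addr0.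
Qed.

HB.instance Definition _ R := GRing.isLinear.Build F sv sv *:%R (sproj R) (sproj_lin R).

Lemma sproj_id (R : {set 'I_n}) (x : sv) : ssupp x \subset R -> sproj R x = x.
Proof.
move=> /subsetP h.
have H j : j \notin R -> x.1 0 j = 0 /\ x.2 0 j = 0.
  move=> jR; have := contra (h j) jR; rewrite inE negb_or !negbK.
  by case/andP => /eqP -> /eqP ->.
apply: sv_eq => j; rewrite ?sproj1 ?sproj2; case: ifP => // /negbT /H [] //.
Qed.

Lemma in_ssupp (x : sv) j : (j \in ssupp x) = (x.1 0 j != 0) || (x.2 0 j != 0).
Proof. by rewrite inE. Qed.

Lemma bigmin_le (I : finType) (P : pred I) (f : I -> nat) m i :
  P i -> (\big[minn/m]_(j | P j) f j <= f i)%N.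
Proof.
move=> Pi; rewrite /index_enum; have : i \in Finite.enum I by rewrite -enumT mem_enum.
elim: (Finite.enum I) => // a r IH; rewrite inE big_cons => /predU1P[<-|ir].
  by rewrite Pi geq_minl.
case: ifP => _; last exact: IH.
exact: leq_trans (geq_minr _ _) (IH ir).
Qed.


Lemma sympl_linl (x y z : sv) a : sympl (a *: x + y) z = a * sympl x z + sympl y z.
Proof.
rewrite /sympl mulr_sumr -big_split /=; apply: eq_bigr => j _.
rewrite !mxE; ring.
Qed.

Lemma sympl_linr (x y z : sv) a : sympl z (a *: x + y) = a * sympl z x + sympl z y.
Proof.
rewrite /sympl mulr_sumr -big_split /=; apply: eq_bigr => j _.
rewrite !mxE; ring.
Qed.

Lemma sympl0l (z : sv) : sympl 0 z = 0.
Proof. by rewrite /sympl big1 // => j _; rewrite !mxE !mul0r subr0. Qed.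

Lemma sympl_linr_is (z : sv) : linear (sympl z : sv -> F^o).
Proof. by move=> a x y; rewrite sympl_linr. Qed.

Lemma mem_sdual (C : {vspace sv}) y : (forall x, x \in C -> sympl x y = 0) -> y \in sdual C.
Proof.
move=> h; apply: memv_span; rewrite mem_filter mem_enum; apply/andP; split.
  by apply/forallP => x; apply/implyP => /h ->.
exact: memvf.
Qed.

Definition gmap (C : {vspace sv}) (y : sv) : 'rV[F]_(\dim C) :=
  \row_(i < \dim C) sympl (vbasis C)`_i y.

Lemma gmap_lin C : linear (gmap C).
Proof. by move=> a x y; apply/rowP => i; rewrite !mxE sympl_linr. Qed.

HB.instance Definition _ C := GRing.isLinear.Build F sv _ *:%R (gmap C) (gmap_lin C).

Lemma dim_sdual (C : {vspace sv}) : (n + n <= \dim (sdual C) + \dim C)%N.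
Proof.
set f := linfun (gmap C).
have sub : (lker f <= sdual C)%VS.
  apply/subvP => y; rewrite memv_ker lfunE /= => /eqP gy.
  apply: mem_sdual => x /coord_vbasis ->.
  elim/big_ind: _ => [|u v hu hv|i _]; first exact: sympl0l.
    by rewrite -[u]scale1r sympl_linl hu hv mulr0 add0r.
  rewrite -[_ *: _]addr0 sympl_linl.
  have := congr1 (fun M : 'rV_(\dim C) => M 0 i) gy; rewrite !mxE => ->.
  by rewrite mulr0 add0r; have := sympl0l y.
have := limg_ker_dim f fullv; rewrite capfv dimvf dimsv => <-.
apply: leq_add; first exact: dimvS.
apply: leq_trans (dimvS (subvf _)) _; rewrite dimvf.
by have h := dim_matrix F 1 (\dim C); rewrite /= h mul1r.
Qed.

Definition e1 (j : 'I_n) : sv := (\row_k ((k == j)%:R), 0).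
Definition e2 (j : 'I_n) : sv := (0, \row_k ((k == j)%:R)).
Definition Xs (S : {set 'I_n}) : seq sv := [seq e1 j | j <- enum S] ++ [seq e2 j | j <- enum S].

Lemma sum_delta (S : {set 'I_n}) (c : 'I_n -> F) k :
  \sum_(j in S) c j * (k == j)%:R = if k \in S then c k else 0.
Proof.
case: ifP => kS.
  rewrite (bigD1 k) //= eqxx mulr1 big1 ?addr0 // => j /andP[_ jk].
  by rewrite eq_sym (negbTE jk) mulr0.
rewrite big1 // => j jS; case: eqP => [kj|]; last by rewrite mulr0.
by rewrite kj jS in kS.
Qed.

Lemma sproj_sum (S : {set 'I_n}) (x : sv) :
  sproj S x = \sum_(j in S) (x.1 0 j *: e1 j + x.2 0 j *: e2 j).
Proof.
have f1 : {morph (fun v : sv => v.1) : u v / u + v >-> u + v} by [].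
have f2 : {morph (fun v : sv => v.2) : u v / u + v >-> u + v} by [].
apply: sv_eq => k.
  rewrite sproj1 (big_morph _ f1 (erefl _)) summxE -(sum_delta S (fun j => x.1 0 j)).
  by apply: eq_bigr => j _; rewrite /= !mxE mulr0 addr0.
rewrite sproj2 (big_morph _ f2 (erefl _)) summxE -(sum_delta S (fun j => x.2 0 j)).
by apply: eq_bigr => j _; rewrite /= !mxE mulr0 add0r.
Qed.

Lemma sproj_in_span (S : {set 'I_n}) (x : sv) : sproj S x \in <<Xs S>>%VS.
Proof.
rewrite sproj_sum; apply: memv_suml => j jS; apply: memvD; apply: memvZ;
  apply: memv_span; rewrite mem_cat map_f ?orbT // mem_enum //.
Qed.

Lemma dim_img_sproj (S : {set 'I_n}) (D : {vspace sv}) :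
  (\dim (linfun (sproj S) @: D) <= #|S| + #|S|)%N.
Proof.
have : (linfun (sproj S) @: D <= <<Xs S>>)%VS.
  by apply/subvP => v /memv_imgP [u _ ->]; rewrite lfunE sproj_in_span.
move/dimvS/leq_trans; apply; apply: leq_trans (dim_span _) _.
by rewrite size_cat !size_map cardE.
Qed.

End S.

Theorem proposition21 (F : finFieldType) (n k : nat) (C : {vspace svec F n})
    (I J : {set 'I_n}) :
  (C <= sdual C)%VS ->
  (k <= n)%N ->
  \dim C = (n - k)%N ->
  I != set0 ->
  I \proper J ->
  swt_ge C #|I|.+1 ->
  (2 * #|J| < n + k + 2 * #|I|)%N ->
  ((n - #|J|).+1 <= gsw (n + k + 2 * #|I| - 2 * #|J|) (sdual C))%N ->
  sshorten I (spuncture J (sdual C)) != sshorten I C.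
Proof.
move=> Cso kn dimC I0 IJ swtC ht hg.
set t := (n + k + 2 * #|I| - 2 * #|J|)%N in hg *.
set D := sdual C.
set S := J :\: I.
pose p : 'End(svec F n) := linfun (sproj S).
set W := (D :&: lker p)%VS.
have IJs : I \subset J := proper_sub IJ.
have cIJ := subset_leq_card IJs.
have cardS : #|S| = (#|J| - #|I|)%N by rewrite cardsD (setIidPr IJs).
have dimD : (n + n <= \dim D + \dim C)%N := dim_sdual C.
have dW : (t <= \dim W)%N.
  have h1 : (\dim (D :&: lker p) + \dim (p @: D))%N = \dim D := limg_ker_dim p D.
  have h2 : (\dim (p @: D) <= #|S| + #|S|)%N := dim_img_sproj S D.
  rewrite /W /t; rewrite dimC in dimD; rewrite cardS in h2; lia.
set R0 := ~: J.
have cR0 : #|R0| = (n - #|J|)%N.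
  have h : (#|J| + #|~: J|)%N = n := etrans (cardsC J) (card_ord n).
  rewrite /R0; lia.
have nV : ~~ (t <= \dim (sshorten R0 D))%N.
  apply/negP => h.
  have h' : (gsw t D <= #|R0|)%N :=
    @bigmin_le _ (fun R : {set 'I_n} => (t <= \dim (sshorten R D))%N) (fun R => #|R|) n R0 h.
  rewrite cR0 in h'; move: (leq_trans hg h'); lia.
have nsub : ~~ (W <= sshorten R0 D)%VS.
  by apply/negP => /dimvS h; move: nV dW h; lia.
case: (pickP (fun y => (y \in W) && (y \notin sshorten R0 D))) => [y /andP[yW ynV] | none];
  last first.
  case/negP: nsub; apply/subvP => y yW; have := none y; rewrite yW /=.
  by move/negbFE.
move: yW; rewrite memv_cap memv_ker lfunE => /andP[yD /eqP py0].
have hS j : j \in S -> y.1 0 j = 0 /\ y.2 0 j = 0.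
  move=> jS; have := congr1 (fun v : svec F n => (v.1 0 j, v.2 0 j)) py0.
  by rewrite /= sproj1 sproj2 jS !mxE; case=> -> ->.
have : ~~ (ssupp y \subset R0).
  apply: contra ynV => sub; rewrite -(sproj_id sub); apply: memv_span; apply: map_f.
  by rewrite mem_filter yD sub mem_enum memvf.
case/subsetPn => j jy; rewrite /R0 inE negbK => jJ.
have jI : j \in I.
  apply/contraT => jnI; have jS : j \in S by rewrite inE jnI jJ.
  have [a b] := hS j jS.
  by rewrite in_ssupp a b eqxx in jy.
set z := sproj J y.
have zP : z \in spuncture J D.
  by apply: memv_span; apply: map_f; rewrite mem_filter yD mem_enum memvf.
have zs : ssupp z \subset I.
  apply/subsetP => i; rewrite in_ssupp sproj1 sproj2; case: ifP => iJ; last by rewrite eqxx.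
  move=> hi; apply/contraT => inI; have iS : i \in S by rewrite !inE inI iJ.
  have [a b] := hS i iS.
  by rewrite a b eqxx in hi.
have w_in : sproj I z \in sshorten I (spuncture J D).
  by apply: memv_span; apply: map_f; rewrite mem_filter zP zs mem_enum memvf.
have w_nz : sproj I z != 0.
  apply/negP => /eqP w0; have := congr1 (fun v : svec F n => (v.1 0 j, v.2 0 j)) w0.
  rewrite sproj1 sproj2 /z sproj1 sproj2 jI jJ /= !mxE; case=> a b.
  by rewrite in_ssupp a b eqxx in jy.
have C0 : (sshorten I C <= 0)%VS.
  apply/span_subvP => v /mapP [x]; rewrite mem_filter => /andP[/andP[xC xI] _] ->.
  rewrite memv0; case: (eqVneq x 0) => [->|xn0].
    by apply/eqP; apply: sv_eq => i; rewrite ?sproj1 ?sproj2 !mxE; case: ifP.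
  have := swtC x xC xn0; rewrite /swt => h.
  by have := leq_trans h (subset_leq_card xI); rewrite ltnn.
apply/negP => /eqP E; rewrite E in w_in.
by have := subvP C0 _ w_in; rewrite memv0 (negbTE w_nz).
Qed.
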